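(* Let $G$ be a tree, let $P$ and $T$ be valid search trees on $G$. Then every node $v$ of $T$ is a transition point (with respect to $T$) of at most one node $y$ of $P$.
   Context: Search tree on a tree: a rooted tree $T$ is a valid search tree on an unrooted tree $G$ if the root $r$ of $T$ is a vertex of $G$ and the subtrees of $T\setminus r$ are valid search trees on the connected components of $G\setminus r$. For a node $y$ of $P$, $P(y)$ denotes the subtree of $P$ rooted at $y$ (and its vertex set). Transition points: let $y$ be a non-leaf node of $P$ with children $y_1,\dots,y_d$, and regard $y$ itself as belonging to the part $P(y_1)$ (i.e. the parts are $\{y\}\cup P(y_1), P(y_2),\dots,P(y_d)$). For $i=1,\dots,d$ let $\ell_i$ be the node of the $i$-th part having smallest depth in $T$. Let $\ell_{i^*}$ be the one of smallest depth in $T$ among $\ell_1,\dots,\ell_d$ (it is the lowest common ancestor in $T$ of all nodes of $P(y)$), called the dominating node of $P(y)$ in $T$. For each $i\neq i^*$, the node $\ell_i$ is called the transition point of $y$ for $P(y_i)$. *)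

(* Defs.v *)
From mathcomp Require Import all_boot.
Set Implicit Arguments.
Unset Strict Implicit.
Unset Printing Implicit Defensive.

Section Defs.
Variable V : finType.

Definition simple_graph (e : rel V) : Prop := symmetric e /\ irreflexive e.

Definition has_cycle (e : rel V) : Prop :=
  exists (x : V) (p : seq V),
    [/\ 2 <= size p, path e x p, uniq (x :: p) & e (last x p) x].

Definition is_tree (e : rel V) : Prop :=
  [/\ simple_graph e, (forall x y : V, connect e x y) & ~ has_cycle e].

Definition restr (e : rel V) (A : {set V}) : rel V :=
  fun x y => [&& e x y, x \in A & y \in A].
Definition comp (e : rel V) (A : {set V}) (x : V) : {set V} :=
  [set y in A | connect (restr e A) x y].

(* valid e par S r : the nodes of S, with parent map par, form a rooted tree
   with root r which is a valid search tree on G[S]: r \in S, and for every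
   connected component C of G[S \ r] there is a child c of r (par c = Some r)
   such that the subtree rooted at c is a valid search tree on C. *)
Inductive valid (e : rel V) (par : V -> option V) : {set V} -> V -> Prop :=
| Valid (S : {set V}) (r : V) :
    r \in S ->
    (forall x, x \in S :\ r ->
       exists c, [/\ c \in comp e (S :\ r) x, par c = Some r
                   & valid e par (comp e (S :\ r) x) c]) ->
    valid e par S r.

Definition search_tree (e : rel V) (par : V -> option V) (r : V) : Prop :=
  valid e par [set: V] r /\ par r = None.

Definition anc (par : V -> option V) (z x : V) : bool :=
  [exists n : 'I_#|V|.+1, iter n (obind par) (Some x) == Some z].

Definition depth (par : V -> option V) (x : V) : nat :=
  #|[set z | (z != x) && anc par z x]|.

Definition subtree (par : V -> option V) (y : V) : {set V} :=
  [set x | anc par y x].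

Definition children (par : V -> option V) (y : V) : {set V} :=
  [set c | par c == Some y].

(* the parts of P(y): y is put into the part of its designated first child
   fst y = y_1 *)
Definition part (par : V -> option V) (fst : V -> V) (y c : V) : {set V} :=
  if c == fst y then y |: subtree par c else subtree par c.

Definition is_top (parT : V -> option V) (A : {set V}) (v : V) : Prop :=
  v \in A /\ forall w, w \in A -> depth parT v <= depth parT w.

(* v is a transition point (w.r.t. T) of the node y of P:
   v = l_i for some part i, and i <> i*, where l_{i*} has smallest depth
   among l_1, ..., l_d. *)
Definition transition_point (parP : V -> option V) (fst : V -> V)
    (parT : V -> option V) (v y : V) : Prop :=
  exists c, [/\ c \in children parP y,
    is_top parT (part parP fst y c) v &
    exists c' u, [/\ c' \in children parP y, c' != c,
      is_top parT (part parP fst y c') u &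
      forall c'' w, c'' \in children parP y ->
        is_top parT (part parP fst y c'') w -> depth parT u <= depth parT w]].

End Defs.

(* Main.v *)
Require Import Defs.
From mathcomp Require Import all_boot.
Require Import Defs.
Set Implicit Arguments. Unset Strict Implicit. Unset Printing Implicit Defensive.

Definition ancn (V : finType) (par : V -> option V) (z x : V) :=
  exists n, iter n (obind par) (Some x) = Some z.

Lemma ancn_refl (V : finType) (par : V -> option V) x : ancn par x x.
Proof. by exists 0. Qed.

Lemma ancn_trans (V : finType) (par : V -> option V) z y x :
  ancn par z y -> ancn par y x -> ancn par z x.
Proof. by move=> [m Hm] [n Hn]; exists (m + n); rewrite iterD Hn. Qed.

Lemma ancn_par (V : finType) (par : V -> option V) p x :
  par x = Some p -> ancn par p x.
Proof. by move=> H; exists 1. Qed.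

Lemma anc_ancn (V : finType) (par : V -> option V) z x :
  anc par z x <-> ancn par z x.
Proof.
split.
  by move=> /existsP [n /eqP Hn]; exists n.
move=> [n Hn]; apply/existsP.
have Hc : fconnect (obind par) (Some x) (Some z) by rewrite -Hn fconnect_iter.
have Hm := findex_max Hc.
have Ho : order (obind par) (Some x) <= #|V|.+1 by rewrite -card_option max_card.
have Hlt : findex (obind par) (Some x) (Some z) < #|V|.+1 by apply: leq_trans Hm Ho.
by exists (Ordinal Hlt); rewrite /= iter_findex.
Qed.

Lemma iter_None (V : finType) (par : V -> option V) n :
  iter n (obind par) None = None.
Proof. by elim: n => //= n ->. Qed.

Lemma ancn_comp (V : finType) (par : V -> option V) a b x :
  ancn par a x -> ancn par b x -> ancn par a b \/ ancn par b a.
Proof.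
move=> [m Hm] [n Hn]; case: (leqP m n) => H.
  right; exists (n - m); by rewrite -Hm -iterD subnK.
left; exists (m - n); rewrite -Hn -iterD subnK //; exact: ltnW.
Qed.

Lemma ancn_child (V : finType) (par : V -> option V) y x :
  ancn par y x -> y != x -> exists c, par c = Some y /\ ancn par c x.
Proof.
move=> [n]; elim: n x => [|n IH] x.
  by move=> [->]; rewrite eqxx.
rewrite iterSr /=; case Hp: (par x) => [p|]; last by rewrite iter_None.
case: n IH => [|n] IH.
  by move=> [<-] _; exists x; split => //; exact: ancn_refl.
move=> Hi Hne; case: (eqVneq y p) => [Hyp|Hyp].
  by exists x; split; [rewrite Hp Hyp | exact: ancn_refl].
have [c [Hc Hcp]] := IH p Hi Hyp.
exists c; split => //; apply: ancn_trans Hcp _; exact: ancn_par.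
Qed.

Lemma ancn_proper_par (V : finType) (par : V -> option V) z x :
  ancn par z x -> z != x -> exists p, par x = Some p /\ ancn par z p.
Proof.
move=> [[|n]]; first by move=> [->]; rewrite eqxx.
rewrite iterSr /=; case Hp: (par x) => [p|]; last by rewrite iter_None.
by move=> Hi _; exists p; split => //; exists n.
Qed.

Lemma comp_sub (V : finType) (e : rel V) (A : {set V}) (x : V) : comp e A x \subset A.
Proof. by apply/subsetP => y; rewrite inE => /andP []. Qed.

Lemma valid_ind2 (V : finType) (e : rel V) (par : V -> option V)
  (P : {set V} -> V -> Prop) :
  (forall (S : {set V}) (r : V), r \in S ->
    (forall x : V, x \in S :\ r -> exists c : V, [/\ c \in comp e (S :\ r) x, par c = Some r,
        valid e par (comp e (S :\ r) x) c & P (comp e (S :\ r) x) c]) -> P S r) ->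
  forall (S : {set V}) (r : V), valid e par S r -> P S r.
Proof.
move=> HP S r HV.
have [n Hn] : exists n, #|S| <= n by exists #|S|.
elim: n S r HV Hn => [|n IH] S r [S' r' Hr Hc] Hn.
  by move: Hn; rewrite leqn0 => /eqP/cards0_eq H; rewrite H inE in Hr.
apply: HP => // x Hx; have [c [H1 H2 H3]] := Hc x Hx.
exists c; split => //; apply: IH H3 _.
have Hsub := comp_sub e (S' :\ r') x.
have := subset_leq_card Hsub; rewrite (cardsD1 r') Hr add1n in Hn.
rewrite -ltnS => H; apply: leq_trans H Hn.
Qed.

Lemma valid_anc (V : finType) (e : rel V) (par : V -> option V) S r :
  valid e par S r -> forall x, x \in S -> ancn par r x.
Proof.
elim/valid_ind2 => {}S {}r Hr Hc x Hx.
case: (eqVneq x r) => [->|Hxr]; first exact: ancn_refl.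
have Hx' : x \in S :\ r by rewrite !inE Hxr.
have [c [Hcx Hpc _ IH]] := Hc x Hx'.
apply: ancn_trans (ancn_par Hpc) (IH x _).
by rewrite inE Hx' /= connect0.
Qed.

Lemma valid_par (V : finType) (e : rel V) (par : V -> option V) S r :
  valid e par S r -> forall x, x \in S -> x != r -> exists2 p, p \in S & par x = Some p.
Proof.
elim/valid_ind2 => {}S {}r Hr Hc x Hx Hxr.
have Hx' : x \in S :\ r by rewrite !inE Hxr.
have [c [Hcx Hpc _ IH]] := Hc x Hx'.
case: (eqVneq x c) => [->|Hxc]; first by exists r.
have Hxx : x \in comp e (S :\ r) x by rewrite inE Hx' /= connect0.
have [p Hp Hpx] := IH x Hxx Hxc; exists p => //.
by move/subsetP: (comp_sub e (S :\ r) x) => /(_ p Hp); rewrite inE => /andP [].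
Qed.

Lemma st_acyc (V : finType) (e : rel V) (par : V -> option V) r x n :
  search_tree e par r -> iter n.+1 (obind par) (Some x) <> Some x.
Proof.
move=> [HV Hr] Hc.
have [k Hk] := valid_anc HV (in_setT x).
have Hj : forall j, iter (j * n.+1) (obind par) (Some x) = Some x.
  by elim=> [|j IH] //; rewrite mulSn iterD IH Hc.
 have := Hj k.+1; rewrite mulnS addnC iterD.
have -> : iter k.+1 (obind par) (Some x) = None by rewrite iterS Hk /= Hr.
by rewrite iter_None.
Qed.

Lemma st_antisym (V : finType) (e : rel V) (par : V -> option V) r a b :
  search_tree e par r -> ancn par a b -> ancn par b a -> a = b.
Proof.
move=> Hst [m Hm] [n Hn].
case: (eqVneq a b) => // Hab; exfalso.
case Emn: (n + m) => [|q].
  move: Emn => /eqP; rewrite addn_eq0 => /andP [_ /eqP Em].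
  by move: Hm; rewrite Em /= => [[]] E; rewrite E eqxx in Hab.
apply: (@st_acyc _ _ _ _ b q Hst); by rewrite -Emn iterD Hm Hn.
Qed.

Lemma st_irr (V : finType) (e : rel V) (par : V -> option V) r x :
  search_tree e par r -> par x <> Some x.
Proof. by move=> Hst H; apply: (@st_acyc _ _ _ _ x 0 Hst); rewrite /= H. Qed.

Lemma depth_lt (V : finType) (e : rel V) (par : V -> option V) r w u :
  search_tree e par r -> ancn par w u -> w != u -> depth par w < depth par u.
Proof.
move=> Hst Hwu Hne; rewrite /depth; apply: proper_card; apply/properP; split.
  apply/subsetP => z; rewrite !inE => /andP [Hzw /anc_ancn Hz].
  have Hzu := ancn_trans Hz Hwu.
  rewrite (_ : anc par z u) ?andbT; last by apply/anc_ancn.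
  apply/eqP => Ezu; subst z.
  by move: Hne; rewrite (st_antisym Hst Hwu Hz) eqxx.
exists w; rewrite !inE ?eqxx //= Hne /=; exact/anc_ancn.
Qed.

Lemma depth_eq (V : finType) (e : rel V) (par : V -> option V) r w u :
  search_tree e par r -> ancn par w u -> depth par u <= depth par w -> w = u.
Proof.
move=> Hst Hwu Hd; case: (eqVneq w u) => // Hne.
by have := depth_lt Hst Hwu Hne; rewrite ltnNge Hd.
Qed.

Lemma restr_in (V : finType) (e : rel V) (B : {set V}) (x t : V) :
  connect (restr e B) x t -> x \in B -> t \in B.
Proof.
move=> /connectP [p Hp ->]; elim: p x Hp => [|y p IH] x //= /andP [Hxy Hp] _.
by apply: IH Hp _; move: Hxy; rewrite /restr => /and3P [].
Qed.

Lemma CL (V : finType) (e : rel V) (A B : {set V}) (x t : V) :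
  connect (restr e (A :&: B)) x t -> connect (restr e (A :&: comp e B x)) x t.
Proof.
move=> /connectP [p Hp ->]; apply/connectP; exists p => //.
suff H : forall y, path (restr e (A :&: B)) y p -> connect (restr e B) x y ->
  path (restr e (A :&: comp e B x)) y p by apply: H Hp (connect0 _ _).
elim: p {Hp} => [|z p IH] y //= /andP [Hyz Hp] Hc.
move: Hyz; rewrite /restr !inE => /and3P [Heyz /andP [HyA HyB] /andP [HzA HzB]].
have Hcz : connect (restr e B) x z.
  apply: connect_trans Hc (connect1 _); by rewrite /restr Heyz HyB HzB.
apply/andP; split; last by apply: IH.
by rewrite Heyz HyA HyB HzA HzB Hc Hcz.
Qed.

Lemma restr_sym (V : finType) (e : rel V) (B : {set V}) :
  symmetric e -> symmetric (restr e B).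
Proof. by move=> He x y; rewrite /restr He; case: (x \in B); case: (y \in B); rewrite /= ?andbF. Qed.

Lemma comp_conn (V : finType) (e : rel V) (B : {set V}) (y a b : V) :
  symmetric e -> a \in comp e B y -> b \in comp e B y ->
  connect (restr e (comp e B y)) a b.
Proof.
move=> He; rewrite !inE => /andP [_ Ha] /andP [_ Hb].
have Ha' : connect (restr e (comp e B y)) y a.
  by rewrite -[comp e B y]setTI; apply: CL; rewrite setTI.
have Hb' : connect (restr e (comp e B y)) y b.
  by rewrite -[comp e B y]setTI; apply: CL; rewrite setTI.
have Hs := sym_connect_sym (restr_sym (comp e B y) He).
by apply: (connect_trans _ Hb'); rewrite Hs.
Qed.

Lemma comp_same (V : finType) (e : rel V) (B : {set V}) (w y s : V) :
  symmetric e -> s \in comp e B w -> s \in comp e B y -> w \in comp e B y.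
Proof.
move=> He; rewrite !inE => /andP [HsB Hws] /andP [_ Hys].
have Hs := sym_connect_sym (restr_sym B He).
have Hw : connect (restr e B) y w by apply: connect_trans Hys _; rewrite Hs.
rewrite Hw andbT; rewrite Hs in Hws; exact: restr_in Hws HsB.
Qed.

Lemma subtree_eq (V : finType) (e : rel V) (par : V -> option V) (S : {set V}) r :
  valid e par S r -> (forall w s, s \in S -> par w = Some s -> w \in S) ->
  subtree par r = S.
Proof.
move=> HV H1; apply/setP => x; rewrite inE; apply/idP/idP; last first.
  by move=> Hx; apply/anc_ancn; exact: valid_anc HV x Hx.
move/anc_ancn => [n]; have Hr : r \in S by case: HV.
elim: n x => [|n IH] x; first by move=> [->].
rewrite iterSr /=; case Hp: (par x) => [p|]; last by rewrite iter_None.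
by move=> /IH Hpin; apply: H1 Hpin Hp.
Qed.

Definition connS (V : finType) (e : rel V) (S : {set V}) :=
  forall a b, a \in S -> b \in S -> connect (restr e S) a b.

Lemma struct_gen (V : finType) (e : rel V) (par : V -> option V) (S : {set V}) r :
  symmetric e -> valid e par S r ->
  (forall w s, s \in S -> par w = Some s -> w \in S) ->
  (forall p, par r = Some p -> p \notin S) ->
  connS e S ->
  forall y, y \in S -> exists S' : {set V},
    [/\ valid e par S' y, subtree par y = S' & connS e S'].
Proof.
move=> He HV; move: HV; elim/valid_ind2 => {}S {}r Hr Hc H1 H2 H3 y Hy.
have HV : valid e par S r.
  apply: Valid => // x Hx; have [c [? ? ? _]] := Hc x Hx; by exists c.
case: (eqVneq y r) => [->|Hyr].
  by exists S; split => //; exact: subtree_eq HV H1.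
have Hy' : y \in S :\ r by rewrite !inE Hyr.
have [c [Hcy Hpc HVc IH]] := Hc y Hy'.
have Hyy : y \in comp e (S :\ r) y by rewrite inE Hy' /= connect0.
have HsubC := subsetP (comp_sub e (S :\ r) y).
apply: IH => //.
- move=> w s Hs Hw.
  have HsS : s \in S :\ r by exact: HsubC.
  have HwS : w \in S by apply: H1 Hw; move: HsS; rewrite !inE => /andP [].
  have Hwr : w != r.
    apply/eqP => Ewr; subst w; have := H2 s Hw.
    by move: HsS; rewrite !inE => /andP [_ ->].
  have Hw' : w \in S :\ r by rewrite !inE Hwr.
  have [c' [Hc'w Hpc' HVc' _]] := Hc w Hw'.
  have Hww : w \in comp e (S :\ r) w by rewrite inE Hw' /= connect0.
  have Hwc' : w != c'.
    apply/eqP => Ewc; subst c'; move: Hw; rewrite Hpc' => [[Ers]].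
    by move: HsS; rewrite Ers !inE eqxx.
  have [p Hp Hpw] := valid_par HVc' Hww Hwc'.
  move: Hw; rewrite Hpw => [[Eps]]; subst p.
  exact: comp_same He Hp Hs.
- move=> p; rewrite Hpc => [[<-]]; apply/negP => /HsubC; by rewrite !inE eqxx.
- by move=> a b Ha Hb; apply: comp_conn.
Qed.

Lemma struct (V : finType) (e : rel V) (par : V -> option V) r :
  is_tree e -> search_tree e par r ->
  forall y, exists S' : {set V},
    [/\ valid e par S' y, subtree par y = S' & connS e S'].
Proof.
move=> [[He _] Hconn _] [HV Hr] y.
apply: (struct_gen He HV) => //.
- by move=> p; rewrite Hr.
- move=> a b _ _; rewrite (@eq_connect _ _ e) ?Hconn // => u v.
  by rewrite /restr !inE !andbT.
Qed.

Lemma sep (V : finType) (e : rel V) (par : V -> option V) (S : {set V}) r :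
  valid e par S r -> forall (A : {set V}) x t, x \in A -> x \in S ->
  connect (restr e (A :&: S)) x t ->
  exists w, [/\ w \in A, ancn par w x & ancn par w t].
Proof.
elim/valid_ind2 => {}S {}r Hr Hc A x t HxA HxS Hxt.
have HV : valid e par S r.
  apply: Valid => // z Hz; have [c [? ? ? _]] := Hc z Hz; by exists c.
have HtS : t \in A :&: S by apply: restr_in Hxt _; rewrite inE HxA HxS.
case HrA: (r \in A).
  exists r; split => //; apply: valid_anc HV _ _ => //.
  by move: HtS; rewrite inE => /andP [].
have Hxr : x != r by apply/eqP => E; rewrite -E HxA in HrA.
have Hx' : x \in S :\ r by rewrite !inE Hxr.
have EAS : A :&: S = A :&: (S :\ r).
  apply/setP => z; rewrite !inE; case: (eqVneq z r) => [->|] //=.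
  by rewrite HrA.
rewrite EAS in Hxt; have Hxt' := CL Hxt.
have [c [Hcx Hpc HVc IH]] := Hc x Hx'.
apply: IH Hxt' => //; by rewrite inE Hx' /= connect0.
Qed.

Lemma part_cases (V : finType) (par : V -> option V) fst y c x :
  x \in part par fst y c -> (x = y /\ c = fst y) \/ ancn par c x.
Proof.
rewrite /part; case: (eqVneq c (fst y)) => [->|_]; rewrite ?inE.
  by case/orP => [/eqP ->|/anc_ancn]; [left|right].
by move/anc_ancn; right.
Qed.

Lemma part_anc (V : finType) (par : V -> option V) fst y c x :
  par c = Some y -> x \in part par fst y c -> ancn par y x.
Proof.
move=> Hc /part_cases [[-> _]|H]; first exact: ancn_refl.
exact: ancn_trans (ancn_par Hc) H.
Qed.

Lemma anc_part (V : finType) (par : V -> option V) fst y c x :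
  ancn par c x -> x \in part par fst y c.
Proof.
move/anc_ancn => H; rewrite /part; case: ifP => _; by rewrite !inE H ?orbT.
Qed.

Lemma child_notanc (V : finType) e (par : V -> option V) r y c :
  search_tree e par r -> par c = Some y -> ~ ancn par c y.
Proof.
move=> Hst Hc H; have E := st_antisym Hst H (ancn_par Hc); subst y.
exact: st_irr Hst Hc.
Qed.

Lemma part_disj (V : finType) e (par : V -> option V) r fst y c c' x :
  search_tree e par r -> par c = Some y -> par c' = Some y -> c != c' ->
  x \in part par fst y c -> x \in part par fst y c' -> False.
Proof.
move=> Hst Hc Hc' Hne /part_cases [[Ex Ec]|H] /part_cases [[Ex' Ec']|H'].
- by move: Hne; rewrite Ec Ec' eqxx.
- subst x; exact: child_notanc Hst Hc' H'.
- subst x; exact: child_notanc Hst Hc H.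
- have Hsub : forall a b, par a = Some y -> par b = Some y -> a != b ->
      ancn par a b -> False.
    move=> a b Ha Hb Hab Hanc; have [p [Hp Hap]] := ancn_proper_par Hanc Hab.
    move: Hp; rewrite Hb => [[Ep]]; subst p; exact: child_notanc Hst Ha Hap.
  case: (ancn_comp H H') => Hx.
    exact: Hsub Hc Hc' Hne Hx.
  by apply: Hsub Hc' Hc _ Hx; rewrite eq_sym.
Qed.

Lemma side (V : finType) (e : rel V) (parP parT : V -> option V)
    (rP rT : V) (fst : V -> V) v y1 y2 :
  is_tree e -> search_tree e parP rP -> search_tree e parT rT ->
  (exists c1, c1 \in children parP y1 /\ is_top parT (part parP fst y1 c1) v) ->
  transition_point parP fst parT v y2 -> ancn parP y1 y2 -> y1 != y2 -> False.
Proof.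
move=> Ht HP HT [c1 [Hc1 [Hv1 Hmin1]]].
move=> [c2 [Hc2 Htop2 [c' [u [Hc' Hne [Hu _] Hmin]]]]] Hy12 Hne12.
move: Hc1 Hc2 Hc'; rewrite !inE => /eqP Hc1 /eqP Hc2 /eqP Hc'.
have [c [Hpc Hcy2]] := ancn_child Hy12 Hne12.
have Hv2 : ancn parP y2 v by apply: part_anc Hc2 Htop2.1.
have Hvc : v \in part parP fst y1 c by apply: anc_part; exact: ancn_trans Hcy2 Hv2.
have Ec : c = c1.
  case: (eqVneq c c1) => // Hcc; exfalso; exact: part_disj HP Hpc Hc1 Hcc Hvc Hv1.
subst c1.
have Hsub : forall x, ancn parP y2 x -> x \in part parP fst y1 c.
  by move=> x Hx; apply: anc_part; exact: ancn_trans Hcy2 Hx.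
have Hdu : depth parT u <= depth parT v.
  by apply: (Hmin c2 v) => //; rewrite inE Hc2.
have Hu2 : ancn parP y2 u by apply: part_anc Hc' Hu.
have [S [_ HS Hconn]] := struct Ht HP y2.
have HuS : u \in S by rewrite -HS inE; apply/anc_ancn.
have HvS : v \in S by rewrite -HS inE; apply/anc_ancn.
have Huv := Hconn u v HuS HvS.
have [HVT _] := HT.
have Huv' : connect (restr e (S :&: [set: V])) u v by rewrite setIT.
have [w [HwS Hwu Hwv]] := sep HVT HuS (in_setT u) Huv'.
have Hdw : depth parT v <= depth parT w.
  by apply: Hmin1; apply: Hsub; move: HwS; rewrite -HS inE => /anc_ancn.
have Ewv := depth_eq HT Hwv Hdw.
have Ewu := depth_eq HT Hwu (leq_trans Hdu Hdw).
subst w; subst u.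
by apply: (part_disj HP Hc2 Hc' _ Htop2.1 Hu); rewrite eq_sym.
Qed.

Theorem mainTheorem2 (V : finType) (e : rel V) (parP parT : V -> option V)
    (rP rT : V) (fst : V -> V) :
  is_tree e ->
  search_tree e parP rP ->
  search_tree e parT rT ->
  (forall y, children parP y != set0 -> fst y \in children parP y) ->
  forall v y1 y2 : V,
    transition_point parP fst parT v y1 ->
    transition_point parP fst parT v y2 ->
    y1 = y2.
Proof.
move=> Ht HP HT _ v y1 y2 T1 T2.
case: (eqVneq y1 y2) => // Hne; exfalso.
have Hv : forall y, transition_point parP fst parT v y -> ancn parP y v.
  move=> y [c [Hc Htop _]]; move: Hc; rewrite inE => /eqP Hc.
  exact: part_anc Hc Htop.1.
have Top : forall y, transition_point parP fst parT v y ->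
    exists c1, c1 \in children parP y /\ is_top parT (part parP fst y c1) v.
  by move=> y [c [Hc Htop _]]; exists c.
case: (ancn_comp (Hv _ T1) (Hv _ T2)) => H.
  exact: side Ht HP HT (Top _ T1) T2 H Hne.
by apply: side Ht HP HT (Top _ T2) T1 H _; rewrite eq_sym.
Qed.
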